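(* Let $X\subseteq U$ with $|X|=m$ be partitioned (deterministically) into $k$ groups $X_1,\dots,X_k$, and suppose there is $m_0\ge1$ with $|X_i|\le m_0$ for all $i$. Let $h:U\to[n]$ be a simple tabulation hash function. Let $C_i$ be the number of unordered pairs $\{x,y\}\subseteq X_i$ with $x\ne y$ and $h(x)=h(y)$, and $C=\sum_{i=1}^k C_i$. Then $$\mathbb{E}[C]\le\frac{m\,m_0}{2n}\qquad\text{and}\qquad \mathrm{Var}[C]\le\frac{(3^c+1)m^2}{n}+\frac{m\,m_0^2}{n^2}.$$ Moreover, for any query key $q\in U\setminus X$ and any bin $z\in[n]$, $\mathbb{E}[C\mid h(q)=z]\le\frac{m\,m_0}{2n}$.
   Context: Simple tabulation hashing: the key universe is $U=[u]$, each key $x\in U$ is viewed as a vector $(x[0],\dots,x[c-1])$ of $c=O(1)$ characters from $\Sigma=[u^{1/c}]$; the range is $[n]=[2^r]$. $h(x)=h_0(x[0])\oplus\cdots\oplus h_{c-1}(x[c-1])$ with $h_0,\dots,h_{c-1}:\Sigma\to[2^r]$ independent fully random functions and $\oplus$ bitwise XOR. *)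

(* Defs.v *)
From HB Require Import structures.
From mathcomp Require Import all_boot all_order all_algebra.
Set Implicit Arguments. Unset Strict Implicit. Unset Printing Implicit Defensive.
Import Order.TTheory GRing.Theory Num.Theory.

(* Characters: Sigma = [s].  Keys: vectors of c characters (U = [s^c]). *)
Definition Key (s c : nat) := {ffun 'I_c -> 'I_s}.
(* Hash values in [2^r], represented by their r-bit binary expansion. *)
Definition Bin (r : nat) := {ffun 'I_r -> bool}.
Definition Table (s c r : nat) := {ffun 'I_c -> {ffun 'I_s -> Bin r}}.

Definition tab_hash (s c r : nat) (H : Table s c r) (x : Key s c) : Bin r :=
  [ffun b => \big[addb/false]_(j < c) H j (x j) b].

Definition collisions (s c r : nat) (H : Table s c r) (A : {set Key s c}) : nat :=
  #|[set p : {set Key s c} | (p \subset A) && (#|p| == 2) &&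
       [forall x in p, forall y in p, tab_hash H x == tab_hash H y]]|.

Definition C_total (s c r k : nat) (Xs : 'I_k -> {set Key s c}) (H : Table s c r) : nat :=
  \sum_(i < k) collisions H (Xs i).

Local Open Scope ring_scope.

(* Expectation w.r.t. the uniform distribution on tables (fully random h_j). *)
Definition Exp (R : realFieldType) (s c r : nat) (f : Table s c r -> R) : R :=
  (\sum_(H : Table s c r) f H) / (#|{: Table s c r}|)%:R.

Definition Var (R : realFieldType) (s c r : nat) (f : Table s c r -> R) : R :=
  Exp (fun H => (f H - Exp f) ^+ 2).

Definition CondExp (R : realFieldType) (s c r : nat) (f : Table s c r -> R)
  (A : {set Table s c r}) : R :=
  (\sum_(H in A) f H) / (#|A|)%:R.

(* Main.v *)
Require Import Defs.
From HB Require Import structures.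
From mathcomp Require Import all_boot all_order all_algebra.
From mathcomp Require Import zify.
From mathcomp Require Import ring lra.
Import Order.TTheory GRing.Theory Num.Theory.
Set Implicit Arguments. Unset Strict Implicit. Unset Printing Implicit Defensive.

Section Core.
Variables s c r : nat.
Local Notation Tab := (Table s c r).
Local Notation K := (Key s c).

Definition xorB (a b : Bin r) : Bin r := [ffun i => a i (+) b i].

Definition shift (j : 'I_c) (a : 'I_s) (t : Bin r) (H : Tab) : Tab :=
  [ffun j' => [ffun a' => if (j' == j) && (a' == a) then xorB (H j' a') t else H j' a']].

Lemma xorBK a t : xorB (xorB a t) t = a.
Proof. by apply/ffunP => i; rewrite !ffunE addbK. Qed.

Lemma shiftK j a t : involutive (shift j a t).
Proof.
move=> H; apply/ffunP => j'; apply/ffunP => a'; rewrite !ffunE.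
by case: ifP => e; rewrite e /= ?xorBK.
Qed.

Lemma hash_shift_other j a t H (y : K) : y j != a ->
  tab_hash (shift j a t H) y = tab_hash H y.
Proof.
move=> ya; apply/ffunP => b; rewrite !ffunE.
apply: congr_big => // j' _.
rewrite !ffunE; case: eqP => [->|//]; by rewrite (negbTE ya).
Qed.

Lemma hash_shift_self j t H (x : K) :
  tab_hash (shift j (x j) t H) x = xorB (tab_hash H x) t.
Proof.
apply/ffunP => b; rewrite !ffunE (bigD1 j) //= [in RHS](bigD1 j) //=.
have -> : \big[addb/false]_(i < c | i != j) shift j (x j) t H i (x i) b =
          \big[addb/false]_(i < c | i != j) H i (x i) b.
  by apply: eq_bigr => j' /negbTE nj; rewrite !ffunE nj.
rewrite !ffunE !eqxx /= !ffunE.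
set B := \big[_/_]_(_ | _) _.
by case: (H j (x j) b); case: (t b); case: B.
Qed.

Definition cnt (P : pred Tab) : nat := \sum_(H : Tab) P H.

Lemma card_Bin : #|{: Bin r}| = 2 ^ r.
Proof. by rewrite card_ffun card_bool card_ord. Qed.

Lemma sum_xor_eq (a b : Bin r) : \sum_(t : Bin r) (xorB a t == b) = 1%N.
Proof.
rewrite (bigD1 (xorB a b)) //= (_ : xorB a (xorB a b) == b) ?big1 //.
  move=> t nt; suff -> : (xorB a t == b) = false by [].
  apply/negbTE; apply: contra nt => /eqP <-.
  by apply/eqP/ffunP => i; rewrite !ffunE addKb.
by apply/eqP/ffunP => i; rewrite !ffunE addKb.
Qed.

Lemma core (x : K) (j : 'I_c) (phi : Tab -> Bin r) (P : pred Tab) :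
  (forall t H, phi (shift j (x j) t H) = phi H) ->
  (forall t H, P (shift j (x j) t H) = P H) ->
  (2 ^ r * cnt (fun H => (tab_hash H x == phi H) && P H) = cnt P)%N.
Proof.
move=> Iphi IP.
have E t : cnt (fun H => (tab_hash H x == phi H) && P H) =
           cnt (fun H => (xorB (tab_hash H x) t == phi H) && P H).
  rewrite /cnt (reindex_inj (can_inj (shiftK j (x j) t))) /=.
  by apply: eq_bigr => H _; rewrite hash_shift_self Iphi IP.
rewrite -card_Bin -sum_nat_const.
rewrite (eq_bigr _ (fun t _ => E t)) /cnt exchange_big /=.
apply: eq_bigr => H _.
under eq_bigr do rewrite -mulnb.
by rewrite -big_distrl /= sum_xor_eq mul1n.
Qed.


Lemma cntT : cnt predT = #|{: Tab}|.
Proof. by rewrite /cnt -sum1_card. Qed.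

Lemma cnt_eq (P Q : pred Tab) : P =1 Q -> cnt P = cnt Q.
Proof. by move=> E; apply: eq_bigr => H _; rewrite E. Qed.

Lemma cnt_le (P Q : pred Tab) : (forall H, P H -> Q H) -> (cnt P <= cnt Q)%N.
Proof.
move=> E; apply: leq_sum => H _.
by case: (boolP (P H)) => // /E ->.
Qed.

Lemma diff_pos (x y : K) : x != y -> exists j, x j != y j.
Proof.
move=> xy; case: (pickP (fun j => x j != y j)) => [j e|no]; first by exists j.
case/eqP: xy; apply/ffunP => j; move: (no j) => /= /negbFE /eqP //.
Qed.

Lemma pair_prob (x y : K) : x != y ->
  (2 ^ r * cnt (fun H => tab_hash H x == tab_hash H y) = #|{: Tab}|)%N.
Proof.
move=> /diff_pos [j xy].
rewrite -cntT -(core (x := x) (phi := fun H => tab_hash H y) (P := predT) (j := j)).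
- by congr (_ * _)%N; apply: cnt_eq => H /=; rewrite andbT.
- by move=> t H; rewrite hash_shift_other // eq_sym.
- by [].
Qed.

Lemma cond_prob (x y q : K) (z : Bin r) : (0 < c)%N -> x != y ->
  (2 ^ r * (2 ^ r * cnt (fun H => (tab_hash H x == tab_hash H y) && (tab_hash H q == z)))
     = #|{: Tab}|)%N.
Proof.
move=> c0 /diff_pos [j xy].
have -> : (2 ^ r * cnt (fun H => (tab_hash H x == tab_hash H y) && (tab_hash H q == z))
          = cnt (fun H => tab_hash H q == z))%N.
  case: (eqVneq (q j) (x j)) => qx.
  - rewrite (@cnt_eq _ (fun H => (tab_hash H y == tab_hash H x) && (tab_hash H q == z))); last first.
      by move=> H; rewrite eq_sym.
    apply: (core (j := j)).
    + by move=> t H; rewrite hash_shift_other.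
    + by move=> t H; rewrite /= hash_shift_other // qx.
  - apply: (core (j := j)).
    + by move=> t H; rewrite hash_shift_other // eq_sym.
    + by move=> t H; rewrite /= hash_shift_other.
rewrite -cntT -(core (x := q) (j := Ordinal c0) (phi := fun _ => z) (P := predT)) //.
by congr (_ * _)%N; apply: cnt_eq => H /=; rewrite andbT.
Qed.

Definition even4 (x y z w : K) :=
  [forall j, [|| (x j == y j) && (z j == w j), (x j == z j) && (y j == w j)
               | (x j == w j) && (y j == z j)]].

Lemma uniq4 (a b c' d : 'I_s) :
  ~~ [|| (a == b) && (c' == d), (a == c') && (b == d) | (a == d) && (b == c')] ->
  [|| [&& a != b, a != c' & a != d], [&& b != a, b != c' & b != d],
      [&& c' != a, c' != b & c' != d] | [&& d != a, d != b & d != c']].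
Proof.
case: a b c' d => [a ?] [b ?] [c' ?] [d ?].
rewrite -!val_eqE /=.
case: (eqVneq a b); case: (eqVneq a c'); case: (eqVneq a d);
case: (eqVneq b c'); case: (eqVneq b d); case: (eqVneq c' d) => //=; lia.
Qed.

Lemma indep4 (x y z w : K) : x != y -> z != w -> ~~ even4 x y z w ->
  (2 ^ r * (2 ^ r * cnt (fun H => (tab_hash H x == tab_hash H y) && (tab_hash H z == tab_hash H w)))
     = #|{: Tab}|)%N.
Proof.
move=> xy zw /forallPn [j /uniq4].
case/or4P => /and3P [u1 u2 u3].
- rewrite (core (j := j)).
  + exact: pair_prob.
  + by move=> t H; rewrite hash_shift_other // eq_sym.
  + by move=> t H; rewrite /= !hash_shift_other // eq_sym.
- rewrite (@cnt_eq _ (fun H => (tab_hash H y == tab_hash H x) && (tab_hash H z == tab_hash H w))); last first.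
    by move=> H; rewrite eq_sym.
  rewrite (core (j := j)).
  + exact: pair_prob.
  + by move=> t H; rewrite hash_shift_other // eq_sym.
  + by move=> t H; rewrite /= !hash_shift_other // eq_sym.
- rewrite (@cnt_eq _ (fun H => (tab_hash H z == tab_hash H w) && (tab_hash H x == tab_hash H y))); last first.
    by move=> H; rewrite andbC.
  rewrite (core (j := j)).
  + exact: pair_prob.
  + by move=> t H; rewrite hash_shift_other // eq_sym.
  + by move=> t H; rewrite /= !hash_shift_other // eq_sym.
- rewrite (@cnt_eq _ (fun H => (tab_hash H w == tab_hash H z) && (tab_hash H x == tab_hash H y))); last first.
    by move=> H; rewrite andbC eq_sym.
  rewrite (core (j := j)).
  + exact: pair_prob.
  + by move=> t H; rewrite hash_shift_other // eq_sym.
  + by move=> t H; rewrite /= !hash_shift_other // eq_sym.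
Qed.

Lemma dep4 (x y : K) (P : pred Tab) : x != y ->
  (2 ^ r * cnt (fun H => (tab_hash H x == tab_hash H y) && P H) <= #|{: Tab}|)%N.
Proof.
move=> xy; rewrite -(pair_prob xy) leq_mul2l; apply/orP; right.
by apply: cnt_le => H /andP [].
Qed.

End Core.
Lemma cs_split (I T : finType) (A B : pred I) (f g : I -> T) :
  \sum_(a : I) \sum_(b : I) (A a && B b && (f a == g b)) =
  \sum_(t : T) ((\sum_(a : I) (A a && (f a == t))) * (\sum_(b : I) (B b && (g b == t))))%N.
Proof.
under [RHS]eq_bigr do rewrite big_distrl /=.
rewrite [RHS]exchange_big /=; apply: eq_bigr => a _.
under [RHS]eq_bigr do rewrite big_distrr /=.
rewrite [RHS]exchange_big /=; apply: eq_bigr => b _.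
rewrite (bigD1 (f a)) //= big1 ?addn0.
  by rewrite eqxx andbT mulnb [g b == _]eq_sym andbA.
by move=> t nt; rewrite [f a == t]eq_sym (negbTE nt) andbF.
Qed.

Lemma cs_count (I T : finType) (A B : pred I) (f g : I -> T) :
  (2 * \sum_(a : I) \sum_(b : I) (A a && B b && (f a == g b)) <=
   \sum_(a : I) \sum_(a' : I) (A a && A a' && (f a == f a')) +
   \sum_(b : I) \sum_(b' : I) (B b && B b' && (g b == g b')))%N.
Proof.
rewrite !cs_split big_distrr -big_split /=; apply: leq_sum => t _.
rewrite -/(\sum_(a : I) (A a && (f a == t))) -/(\sum_(a : I) (B a && (g a == t))).
move: (\sum_(a : I) (A a && (f a == t))) (\sum_(a : I) (B a && (g a == t))) => u v.
case: (leqP u v) => [/subnK <-|/ltnW/subnK <-]; set d := (_ - _); nia.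
Qed.

Lemma forallA (T : finType) (a b : pred T) :
  [forall j, a j && b j] = [forall j, a j] && [forall j, b j].
Proof.
apply/forallP/andP => [H|[/forallP H1 /forallP H2] j]; last by rewrite H1 H2.
by split; apply/forallP => j; case/andP: (H j).
Qed.

Lemma sum_mem (T : finType) (A : {pred T}) : \sum_(x : T) (x \in A : nat) = #|A|.
Proof.
rewrite -sum1_card [RHS]big_mkcond; apply: eq_bigr => x _; by case: (x \in A).
Qed.

Section Pat.
Variables s c : nat.
Local Notation K := (Key s c).
Variable X : {set K}.
Variable pi : {ffun 'I_c -> 'I_3}.

Definition matchp (x y z w : K) :=
  [forall j, if val (pi j) == 0%N then (x j == y j) && (z j == w j)
             else if val (pi j) == 1%N then (x j == z j) && (y j == w j)
             else (x j == w j) && (y j == z j)].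

Definition Ap (u : K * K) :=
  (u.1 \in X) && (u.2 \in X) && [forall j, (val (pi j) == 2%N) ==> (u.1 j == u.2 j)].

Definition Fp (u : K * K) : {ffun 'I_c -> option ('I_s * 'I_s)} :=
  [ffun j => if val (pi j) == 2%N then None else Some (u.1 j, u.2 j)].
Definition Gp (u : K * K) : {ffun 'I_c -> option ('I_s * 'I_s)} :=
  [ffun j => if val (pi j) == 2%N then None
             else if val (pi j) == 0%N then Some (u.1 j, u.2 j) else Some (u.2 j, u.1 j)].

Lemma ffeq (T : finType) (U : eqType) (f g : {ffun T -> U}) :
  (f == g) = [forall j, f j == g j].
Proof.
apply/eqP/forallP => [->|E] //; apply/ffunP => j; exact/eqP.
Qed.

Lemma match_eq x y z w :
  [&& x \in X, y \in X, z \in X, w \in X & matchp x y z w] =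
  Ap (x, w) && Ap (y, z) && (Fp (x, w) == Gp (y, z)).
Proof.
rewrite /Ap /=.
case: (x \in X); case: (y \in X); case: (z \in X); case: (w \in X) => //=;
  rewrite ?andbF //.
rewrite ffeq -!forallA; apply: eq_forallb => j; rewrite !ffunE.
case: (pi j) => [[|[|[|v]]] hv] //=.
- by rewrite (inj_eq (@Some_inj _)) xpair_eqE [w j == _]eq_sym.
- by rewrite (inj_eq (@Some_inj _)) xpair_eqE [w j == _]eq_sym.
- by rewrite !andbT.
Qed.

Lemma GG u v : (Gp u == Gp v) = (Fp u == Fp v).
Proof.
rewrite !ffeq; apply: eq_forallb => j; rewrite !ffunE.
case: (pi j) => [[|[|[|k]]] hv] //=.
by rewrite !(inj_eq (@Some_inj _)) !xpair_eqE andbC.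
Qed.


Lemma sumX2 : \sum_(a : K * K) ((a.1 \in X) && (a.2 \in X)) = (#|X| * #|X|)%N.
Proof.
rewrite -(pair_bigA _ (fun x y => ((x \in X) && (y \in X) : nat))) /=.
transitivity (\sum_(i : K) ((i \in X : nat) * \sum_(j : K) (j \in X : nat)))%N.
  by apply: eq_bigr => i _; rewrite big_distrr; apply: eq_bigr => j _; case: (i \in X); case: (j \in X).
by rewrite -big_distrl sum_mem.
Qed.
Lemma QF_bound :
  (\sum_(u : K * K) \sum_(u' : K * K) (Ap u && Ap u' && (Fp u == Fp u')) <= #|X| * #|X|)%N.
Proof.
pose tau (q : (K * K) * (K * K)) := ((q.1.1, q.2.1), (q.2.2, q.1.2)).
have tau_inj : injective tau.
  by move=> [[? ?] [? ?]] [[? ?] [? ?]] /= [-> -> -> ->].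
rewrite (pair_bigA _ (fun u u' => (Ap u && Ap u' && (Fp u == Fp u') : nat))) /=.
rewrite (reindex_inj tau_inj) /= -sumX2.
rewrite -(pair_bigA _ (fun a b => (Ap (tau (a, b)).1 && Ap (tau (a, b)).2 &&
                                 (Fp (tau (a, b)).1 == Fp (tau (a, b)).2) : nat))) /=.
apply: leq_sum => -[x w'] _ /=.
pose w0 : K := [ffun j => if val (pi j) == 2%N then x j else w' j].
pose x0 : K := [ffun j => if val (pi j) == 2%N then w' j else x j].
apply: (@leq_trans (\sum_(b : K * K) ((x \in X) && (w' \in X) && (b == (w0, x0))))).
  apply: leq_sum => -[w x'] _ /=.
  case E: (Ap _ && _ && _) => //.
  move: E; rewrite /Ap /= ffeq => /andP [/andP [/andP [/andP [xX wX] /forallP A1]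
     /andP [/andP [x'X w'X] /forallP A2]] /forallP FE].
  rewrite xX w'X /= lt0b xpair_eqE; apply/andP; split; apply/eqP/ffunP => j;
    move: (A1 j) (A2 j) (FE j); rewrite !ffunE;
    (case: (val (pi j) == 2%N) => /= [/eqP E1 /eqP E2 _|_ _]; first by rewrite ?E1 ?E2).
  - by rewrite (inj_eq (@Some_inj _)) xpair_eqE; case/andP => _ /eqP ->.
  - by rewrite (inj_eq (@Some_inj _)) xpair_eqE; case/andP => /eqP ->.
rewrite (bigD1 (w0, x0)) //= eqxx andbT big1 ?addn0 //.
by move=> b /negbTE ->; rewrite andbF.
Qed.

End Pat.

Section E4.
Variables s c : nat.
Local Notation K := (Key s c).
Variable X : {set K}.

Lemma pat_bound (pi : {ffun 'I_c -> 'I_3}) :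
  (\sum_(p : K * K) \sum_(p' : K * K)
    [&& p.1 \in X, p.2 \in X, p'.1 \in X, p'.2 \in X & matchp pi p.1 p.2 p'.1 p'.2]
   <= #|X| * #|X|)%N.
Proof.
pose sig (q : (K * K) * (K * K)) := ((q.1.1, q.2.1), (q.2.2, q.1.2)).
have sig_inj : injective sig.
  by move=> [[? ?] [? ?]] [[? ?] [? ?]] /= [-> -> -> ->].
have -> : (\sum_(p : K * K) \sum_(p' : K * K)
    [&& p.1 \in X, p.2 \in X, p'.1 \in X, p'.2 \in X & matchp pi p.1 p.2 p'.1 p'.2])
  = \sum_(u : K * K) \sum_(v : K * K) (Ap X pi u && Ap X pi v && (Fp pi u == Gp pi v)).
  rewrite (pair_bigA _ (fun p p' => ([&& p.1 \in X, p.2 \in X, p'.1 \in X, p'.2 \in X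
     & matchp pi p.1 p.2 p'.1 p'.2] : nat))) (reindex_inj sig_inj) /=.
  rewrite (pair_bigA _ (fun u v => (Ap X pi u && Ap X pi v && (Fp pi u == Gp pi v) : nat))).
  by apply: eq_bigr => -[[x w] [y z]] _ /=; rewrite match_eq.
have := cs_count (Ap X pi) (Ap X pi) (Fp pi) (Gp pi).
have -> : (\sum_(b : K * K) \sum_(b' : K * K) (Ap X pi b && Ap X pi b' && (Gp pi b == Gp pi b')))
   = \sum_(b : K * K) \sum_(b' : K * K) (Ap X pi b && Ap X pi b' && (Fp pi b == Fp pi b')).
  by apply: eq_bigr => b _; apply: eq_bigr => b' _; rewrite GG.
rewrite addnn -mul2n leq_mul2l /= => H.
exact: leq_trans H (QF_bound X pi).
Qed.

Definition E4 := \sum_(p : K * K) \sum_(p' : K * K)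
    [&& p.1 \in X, p.2 \in X, p'.1 \in X, p'.2 \in X & even4 p.1 p.2 p'.1 p'.2].

Lemma even_match (x y z w : K) : even4 x y z w -> exists pi, matchp pi x y z w.
Proof.
move=> /forallP ev.
exists [ffun j => inord (if (x j == y j) && (z j == w j) then 0
                         else if (x j == z j) && (y j == w j) then 1 else 2) : 'I_3].
have vi k : (k < 3)%N -> val (inord k : 'I_3) = k by move=> h; exact: inordK.
apply/forallP => j; rewrite ffunE vi; last by case: ifP => //; case: ifP.
case h1: ((x j == y j) && (z j == w j)) => //=.
case h2: ((x j == z j) && (y j == w j)) => //=.
by move: (ev j); rewrite h1 h2.
Qed.

Lemma E4_bound : (E4 <= 3 ^ c * (#|X| * #|X|))%N.
Proof.
pose F (p p' : K * K) (pi : {ffun 'I_c -> 'I_3}) :=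
  [&& p.1 \in X, p.2 \in X, p'.1 \in X, p'.2 \in X & matchp pi p.1 p.2 p'.1 p'.2].
apply: (@leq_trans (\sum_(p : K * K) \sum_(p' : K * K) \sum_(pi : {ffun 'I_c -> 'I_3}) F p p' pi)).
  apply: leq_sum => p _; apply: leq_sum => p' _.
  case E: [&& _, _, _, _ & _] => //.
  move: E => /and5P [a1 a2 a3 a4 /even_match [pi Hpi]].
  rewrite (bigD1 pi) //= /F a1 a2 a3 a4 Hpi /=.
  exact: leq_addr.
have -> : (\sum_(p : K * K) \sum_(p' : K * K) \sum_(pi : {ffun 'I_c -> 'I_3}) F p p' pi)
   = \sum_(pi : {ffun 'I_c -> 'I_3}) \sum_(p : K * K) \sum_(p' : K * K) F p p' pi.
  rewrite [RHS]exchange_big /=; apply: eq_bigr => p _.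
  by rewrite [RHS]exchange_big.
apply: (@leq_trans (\sum_(pi : {ffun 'I_c -> 'I_3}) (#|X| * #|X|))).
  by apply: leq_sum => pi _; exact: pat_bound.
by rewrite sum_nat_const card_ffun !card_ord.
Qed.

End E4.

Lemma sum_eq1 (T : finType) (c0 : T) : \sum_(u : T) (u == c0 : nat) = 1%N.
Proof. by rewrite (bigD1 c0) //= eqxx big1 // => u /negbTE ->. Qed.

Section Coll.
Variables s c r : nat.
Local Notation K := (Key s c).
Local Notation Tab := (Table s c r).

Lemma coll2 (H : Tab) (A : {set K}) :
  (2 * collisions H A = \sum_(u : K * K)
     [&& u.1 \in A, u.2 \in A, u.1 != u.2 & tab_hash H u.1 == tab_hash H u.2])%N.
Proof.
rewrite /collisions.
set S := [set p : {set K} | _].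
set Pu := fun u : K * K => [&& u.1 \in A, u.2 \in A, u.1 != u.2 & tab_hash H u.1 == tab_hash H u.2].
have E1 : \sum_(u : K * K) Pu u =
          \sum_(p : {set K}) \sum_(u : K * K) (([set u.1; u.2] == p) && Pu u).
  rewrite [RHS]exchange_big /=; apply: eq_bigr => u _.
  rewrite (bigD1 [set u.1; u.2]) //= eqxx /= big1 ?addn0 //.
  by move=> p np; rewrite eq_sym (negbTE np).
have E2 p : \sum_(u : K * K) (([set u.1; u.2] == p) && Pu u) = (2 * (p \in S))%N.
  case: (boolP (p \in S)) => pS.
  - move: (pS); rewrite inE => /andP [/andP [pA /cards2P [a [b [ab pab]]]] /forallP Hall].
    have hab : tab_hash H a == tab_hash H b.
      by move: (Hall a); rewrite pab set21 /= => /forallP /(_ b); rewrite set22.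
    have aA : a \in A by apply: (subsetP pA); rewrite pab set21.
    have bA : b \in A by apply: (subsetP pA); rewrite pab set22.
    transitivity (\sum_(u : K * K) ((u == (a, b)) + (u == (b, a))))%N; last first.
      by rewrite big_split /= !sum_eq1.
    apply: eq_bigr => -[x y] _ /=.
    case: (boolP ((x, y) == (a, b))) => [/eqP [-> ->]|nab].
      rewrite /Pu /= pab eqxx aA bA ab hab /= xpair_eqE.
      by rewrite (negbTE ab).
    case: (boolP ((x, y) == (b, a))) => [/eqP [-> ->]|nba].
      rewrite /Pu /= pab setUC eqxx aA bA eq_sym ab eq_sym hab /=.
      by [].
    rewrite addn0; case E: ([set x; y] == p) => //=.
    rewrite /Pu /=; case xy: (x != y); rewrite ?andbF //=.
    move/eqP: E; rewrite pab => E.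
    have : x \in [set a; b] by rewrite -E set21.
    have : y \in [set a; b] by rewrite -E set22.
    move=> /set2P [] Ey /set2P [] Ex; rewrite Ex Ey in xy nab nba;
      by rewrite ?eqxx in xy nab nba.
  - transitivity 0%N; last by []. apply: big1 => -[x y] _ /=.
    case E: ([set x; y] == p) => //=.
    suff : ~~ [&& x \in A, y \in A, x != y & tab_hash H x == tab_hash H y].
      by move/negbTE; rewrite /Pu /= => ->.
    apply: contra pS => /and4P [xA yA xy hxy].
    move/eqP: E => <-; rewrite inE cards2 xy subUset !sub1set xA yA /=.
    apply/forallP => v; apply/implyP => /set2P [] ->;
      apply/forallP => v'; apply/implyP => /set2P [] -> //; by rewrite eq_sym.
rewrite E1 (eq_bigr _ (fun p _ => E2 p)) -big_distrr /=.
by rewrite sum_mem.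
Qed.

End Coll.

Section Groups.
Variables s c r k m0 : nat.
Local Notation K := (Key s c).
Local Notation Tab := (Table s c r).
Variable X : {set K}.
Variable Xs : 'I_k -> {set K}.
Hypothesis hX : X = \bigcup_(i < k) Xs i.
Hypothesis disj : forall i j : 'I_k, i != j -> [disjoint Xs i & Xs j].
Hypothesis hm0 : forall i : 'I_k, (#|Xs i| <= m0)%N.

Definition gx (x y : K) := [exists i, (x \in Xs i) && (y \in Xs i)].
Definition aa (u : K * K) := gx u.1 u.2 && (u.1 != u.2).

Lemma same_group i i' x : x \in Xs i -> x \in Xs i' -> i = i'.
Proof.
move=> h1 h2; apply/eqP; apply: contraT => ne.
by move: (disjointFr (disj ne) h1); rewrite h2.
Qed.

Lemma group_sum x y : \sum_(i < k) ((x \in Xs i) && (y \in Xs i)) = gx x y.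
Proof.
case: (boolP (gx x y)) => [/existsP [i /andP [xi yi]]|ng].
  rewrite (bigD1 i) ?xi ?yi //= big1 // => i' ni'.
  case: (boolP (x \in Xs i')) => // xi'.
  by move: ni'; rewrite (same_group xi' xi) eqxx.
apply: big1 => i _; case: (boolP ((x \in Xs i) && (y \in Xs i))) => // h.
by case/negP: ng; apply/existsP; exists i.
Qed.

Lemma gx_in x y : gx x y -> (x \in X) && (y \in X).
Proof.
by move=> /existsP [i /andP [xi yi]]; rewrite hX; apply/andP; split;
  apply/bigcupP; exists i.
Qed.

Lemma Ctot2 (H : Tab) : (2 * C_total Xs H =
  \sum_(u : K * K) (aa u && (tab_hash H u.1 == tab_hash H u.2)))%N.
Proof.
rewrite /C_total big_distrr /=.
under eq_bigr do rewrite coll2.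
rewrite exchange_big /=; apply: eq_bigr => u _.
transitivity ((\sum_(i < k) ((u.1 \in Xs i) && (u.2 \in Xs i))) *
              ((u.1 != u.2) && (tab_hash H u.1 == tab_hash H u.2)))%N.
  rewrite big_distrl /=; apply: eq_bigr => i _.
  by rewrite mulnb !andbA.
by rewrite group_sum mulnb /aa andbA.
Qed.

Definition Gc := \sum_(u : K * K) aa u.

Lemma Gc_bound : (Gc <= #|X| * m0)%N.
Proof.
rewrite /Gc -(pair_bigA _ (fun x y => aa (x, y) : nat)) /=.
rewrite -sum_mem big_distrl /=; apply: leq_sum => x _.
case: (boolP (x \in X)) => xX; last first.
  rewrite big1 // => y _; rewrite /aa /=.
  by case g: (gx x y) => //; move: (gx_in g); rewrite (negbTE xX).
move: (xX); rewrite hX => /bigcupP [i _ xi].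
rewrite mul1n; apply: leq_trans (hm0 i); rewrite -sum_mem.
apply: leq_sum => y _; rewrite /aa /=.
case g: (gx x y) => //=; move/existsP: g => [i' /andP [xi' yi']].
by rewrite -(same_group xi' xi) yi'; case: (x != y).
Qed.


Local Notation NT := #|{: Tab}|.

Lemma aa_in u : aa u -> [&& u.1 \in X, u.2 \in X & u.1 != u.2].
Proof. by case/andP => /gx_in /andP [-> ->] ->. Qed.

Lemma factE : (2 ^ r * (2 * \sum_(H : Tab) C_total Xs H) = Gc * NT)%N.
Proof.
rewrite big_distrr /=.
under eq_bigr do rewrite Ctot2.
rewrite exchange_big big_distrr /Gc big_distrl /=; apply: eq_bigr => u _.
case au: (aa u) => /=; last by rewrite big1 ?muln0.
have /and3P [_ _ ne] := aa_in au.
by rewrite mul1n -(pair_prob r ne).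
Qed.


Lemma factCd (q : K) (z : Bin r) : (0 < c)%N ->
  (2 ^ r * (2 ^ r * (2 * \sum_(H : Tab) ((tab_hash H q == z) * C_total Xs H))) = Gc * NT)%N.
Proof.
move=> c0.
rewrite big_distrr /=.
have -> : \sum_(H : Tab) (2 * ((tab_hash H q == z) * C_total Xs H))%N =
          \sum_(H : Tab) \sum_(u : K * K) (aa u && ((tab_hash H u.1 == tab_hash H u.2) && (tab_hash H q == z))).
  apply: eq_bigr => H _; rewrite mulnCA Ctot2 big_distrr /=; apply: eq_bigr => u _.
  by rewrite mulnb andbC -!andbA.
rewrite exchange_big big_distrr /= big_distrr /Gc big_distrl /=; apply: eq_bigr => u _.
case au: (aa u) => /=; last by rewrite big1 ?muln0.
have /and3P [_ _ ne] := aa_in au.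
by rewrite mul1n -(cond_prob q z c0 ne).
Qed.

Lemma factA (q : K) (z : Bin r) : (0 < c)%N ->
  (2 ^ r * cnt (fun H : Tab => tab_hash H q == z) = NT)%N.
Proof.
move=> c0.
rewrite -cntT -(core (x := q) (j := Ordinal c0) (phi := fun _ => z) (P := predT)) //.
by congr (_ * _)%N; apply: cnt_eq => H /=; rewrite andbT.
Qed.

Lemma factV : (2 ^ r * 2 ^ r * (4 * \sum_(H : Tab) C_total Xs H ^ 2)
   <= Gc * Gc * NT + 2 ^ r * E4 X * NT)%N.
Proof.
have -> : (4 * \sum_(H : Tab) C_total Xs H ^ 2 =
   \sum_(u : K * K) \sum_(v : K * K) \sum_(H : Tab)
      ((aa u && (tab_hash H u.1 == tab_hash H u.2)) * (aa v && (tab_hash H v.1 == tab_hash H v.2))))%N.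
  rewrite big_distrr /=.
  have -> : \sum_(H : Tab) (4 * C_total Xs H ^ 2)%N =
    \sum_(H : Tab) \sum_(u : K * K) \sum_(v : K * K)
      ((aa u && (tab_hash H u.1 == tab_hash H u.2)) * (aa v && (tab_hash H v.1 == tab_hash H v.2)))%N.
    apply: eq_bigr => H _.
    rewrite -[4]/(2 ^ 2)%N -expnMn Ctot2 -mulnn big_distrl /=; apply: eq_bigr => u _.
    by rewrite big_distrr.
  rewrite exchange_big /=; apply: eq_bigr => u _.
  by rewrite exchange_big.
apply: (@leq_trans (\sum_(u : K * K) \sum_(v : K * K) (aa u * aa v * NT +
   2 ^ r * [&& u.1 \in X, u.2 \in X, v.1 \in X, v.2 \in X & even4 u.1 u.2 v.1 v.2] * NT))%N); last first.
  have E1 : (\sum_(u : K * K) \sum_(v : K * K) (aa u * aa v * NT) = Gc * Gc * NT)%N.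
    rewrite /Gc [in RHS]big_distrl /= [in RHS]big_distrl /=; apply: eq_bigr => u _.
    by rewrite big_distrr /= big_distrl /=.
  have E2 : (\sum_(u : K * K) \sum_(v : K * K) (2 ^ r *
      [&& u.1 \in X, u.2 \in X, v.1 \in X, v.2 \in X & even4 u.1 u.2 v.1 v.2] * NT)
      = 2 ^ r * E4 X * NT)%N.
    rewrite /E4 [in RHS]big_distrr /= [in RHS]big_distrl /=; apply: eq_bigr => u _.
    by rewrite big_distrr /= big_distrl /=.
  rewrite -E1 -E2 -big_split /=; apply: leq_sum => u _.
  by rewrite -big_split.
rewrite big_distrr /=; apply: leq_sum => u _.
rewrite big_distrr /=; apply: leq_sum => v _.
case au: (aa u); last by rewrite big1 ?muln0 // => H _; rewrite mul0n.
case av: (aa v); last by rewrite big1 ?muln0 // => H _; rewrite muln0.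
have /and3P [u1 u2 ne] := aa_in au.
have /and3P [v1 v2 ne'] := aa_in av.
have -> : (\sum_(H : Tab) ((true && (tab_hash H u.1 == tab_hash H u.2)) *
                           (true && (tab_hash H v.1 == tab_hash H v.2))))%N
   = cnt (fun H : Tab => (tab_hash H u.1 == tab_hash H u.2) && (tab_hash H v.1 == tab_hash H v.2)).
  by apply: eq_bigr => H _; rewrite mulnb.
rewrite u1 u2 v1 v2 /=.
case ev: (even4 u.1 u.2 v.1 v.2) => /=.
  rewrite -mulnA muln1; apply: leq_trans (leq_addl _ _).
  rewrite -mulnA; apply: leq_mul => //; apply: leq_trans (dep4 _ ne) _; by rewrite mul1n.
by rewrite -mulnA (indep4 r ne ne') ?ev // !mul1n leq_addr.
Qed.

End Groups.

Unset Implicit Arguments. Set Strict Implicit. Set Printing Implicit Defensive.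
Local Open Scope ring_scope.

Theorem lemma5 (R : realFieldType) (s c r k m0 : nat)
  (X : {set Key s c}) (Xs : 'I_k -> {set Key s c}) :
  (0 < c)%N ->
  X = \bigcup_(i < k) Xs i ->
  (forall i j : 'I_k, i != j -> [disjoint Xs i & Xs j]) ->
  (1 <= m0)%N ->
  (forall i : 'I_k, #|Xs i| <= m0)%N ->
  let m := #|X| in
  let n : R := (2 ^ r)%:R in
  let C := fun H : Table s c r => ((C_total Xs H)%:R : R) in
  [/\ Exp C <= (m * m0)%:R / (2 * n),
      Var C <= ((3 ^ c + 1) * m ^ 2)%:R / n + (m * m0 ^ 2)%:R / n ^+ 2
    & forall (q : Key s c) (z : Bin r), q \notin X ->
        CondExp C [set H | tab_hash H q == z] <= (m * m0)%:R / (2 * n)].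
Proof.
move=> c0 hX disj _ hm0 m n C.
set NT := #|{: Table s c r}|.
have NT0 : (0 < NT)%N.
  by apply/card_gt0P; exists [ffun _ => [ffun _ => [ffun _ => false]]].
have tpos : 0 < NT%:R :> R by rewrite ltr0n.
have npos : 0 < n by rewrite ltr0n expn_gt0.
have Gm : (Gc Xs <= m * m0)%N := Gc_bound hX disj hm0.
have GmR : (Gc Xs)%:R <= (m * m0)%:R :> R by rewrite ler_nat.
set S := (\sum_(H : Table s c r) C_total Xs H)%N.
have hE : n * (2 * S%:R) = (Gc Xs)%:R * NT%:R.
  by have := congr1 (fun x => x%:R : R) (factE r hX disj); rewrite /= !natrM.
have expE : Exp C = (Gc Xs)%:R / (2 * n).
  rewrite /Exp /C -natr_sum -/S -/NT.
  have -> : (S%:R : R) = (Gc Xs)%:R * NT%:R / (2 * n) by rewrite -hE; field; rewrite lt0r_neq0 //.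
  field; rewrite !lt0r_neq0 //.
have bnd (x : R) : x <= (m * m0)%:R -> x / (2 * n) <= (m * m0)%:R / (2 * n).
  move=> hx; apply: ler_wpM2r => //; rewrite invr_ge0 mulr_ge0 // ltW //.
split.
- by rewrite expE; exact: bnd.
- set S2 := (\sum_(H : Table s c r) C_total Xs H ^ 2)%N.
  set e := (E4 X)%:R : R.
  set g := (Gc Xs)%:R : R.
  set t := NT%:R : R.
  have hV : n * n * (4 * S2%:R) <= g * g * t + n * e * t.
    have := factV r hX disj; rewrite -(ler_nat R) natrD !natrM => h.
    exact: h.
  have expS : Exp C = S%:R / t by rewrite /Exp /C -natr_sum.
  have sumsq : \sum_(H : Table s c r) (C H - Exp C) ^+ 2 = S2%:R - S%:R ^+ 2 / t.
    rewrite expS.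
    transitivity (\sum_(H : Table s c r) (C H ^+ 2) - 2 * (S%:R / t) * \sum_(H : Table s c r) C H
                 + (S%:R / t) ^+ 2 * t).
      rewrite (eq_bigr (fun H => C H ^+ 2 - 2 * (S%:R / t) * C H + (S%:R / t) ^+ 2)); last first.
        by move=> H _; ring.
      rewrite big_split /= sumrB -big_distrr /= sumr_const /t mulr_natr.
      by [].
    have -> : \sum_(H : Table s c r) C H ^+ 2 = S2%:R.
      by rewrite /S2 natr_sum; apply: eq_bigr => H _; rewrite natrX.
    have -> : \sum_(H : Table s c r) C H = S%:R by rewrite /S natr_sum.
    by field; rewrite lt0r_neq0 //.
  have varE : Var C = (4 * n * n * (S2%:R * t - S%:R ^+ 2)) / (4 * n * n * t * t).
    rewrite /Var /Exp -/NT -/t sumsq.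
    field; rewrite !lt0r_neq0 //.
  have num : 4 * n * n * (S2%:R * t - S%:R ^+ 2) <= n * e * t * t.
    have -> : 4 * n * n * (S2%:R * t - S%:R ^+ 2) = t * (n * n * (4 * S2%:R)) - (n * (2 * S%:R)) ^+ 2.
      by ring.
    rewrite hE -/g -/t.
    have := ler_wpM2l (ltW tpos) hV.
    nra.
  have he : e <= (3 ^ c)%:R * (m%:R * m%:R).
    by rewrite /e -!natrM ler_nat E4_bound.
  have V1 : Var C <= e / (4 * n).
    rewrite varE ler_pdivrMr; last by rewrite !mulr_gt0.
    have -> : e / (4 * n) * (4 * n * n * t * t) = n * e * t * t.
      by field; rewrite lt0r_neq0 //.
    exact: num.
  apply: (le_trans V1).
  rewrite ler_pdivrMr; last by rewrite mulr_gt0.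
  set a := (3 ^ c)%:R : R.
  set mm := m%:R : R.
  set b := (m * m0 ^ 2)%:R : R.
  have -> : ((3 ^ c + 1) * m ^ 2)%:R = (a + 1) * mm ^+ 2 :> R.
    by rewrite natrM natrD -mulnn natrM expr2.
  have -> : ((a + 1) * mm ^+ 2 / n + b / n ^+ 2) * (4 * n) = 4 * (a + 1) * mm ^+ 2 + 4 * (b / n).
    by field; rewrite lt0r_neq0 //.
  have : 0 <= b / n by rewrite divr_ge0 // ltW.
  have : 0 <= a by [].
  have : 0 <= mm by [].
  nra.
- move=> q z _.
  set SA := (\sum_(H : Table s c r) ((tab_hash H q == z) * C_total Xs H))%N.
  have hC : n * (n * (2 * SA%:R)) = (Gc Xs)%:R * NT%:R.
    by have := congr1 (fun x => x%:R : R) (factCd hX disj q z c0); rewrite /= !natrM.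
  have hA : n * (cnt (fun H : Table s c r => tab_hash H q == z))%:R = NT%:R.
    by have := congr1 (fun x => x%:R : R) (factA q z c0); rewrite /= !natrM.
  have -> : CondExp C [set H | tab_hash H q == z] =
            SA%:R / (cnt (fun H : Table s c r => tab_hash H q == z))%:R.
    rewrite /CondExp /SA natr_sum big_mkcond /= /cnt -sum_mem.
    congr (_ / _%:R); last by apply: eq_bigr => H _; rewrite inE.
    by apply: eq_bigr => H _; rewrite inE /C; case: (_ == _); rewrite ?mul1n ?mul0n.
  have cpos : 0 < (cnt (fun H : Table s c r => tab_hash H q == z))%:R :> R.
    by rewrite -(@ltr_pM2l _ n) // hA mulr0.
  have -> : SA%:R / (cnt (fun H : Table s c r => tab_hash H q == z))%:R = (Gc Xs)%:R / (2 * n) :> R.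
    have -> : (SA%:R : R) = (Gc Xs)%:R * NT%:R / (2 * n * n) by rewrite -hC; field; rewrite lt0r_neq0 //.
    rewrite -hA; field; rewrite !lt0r_neq0 //.
  exact: bnd.
Qed.
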